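(* Let $t\ge1$ and let $h:\{0,1\}^t\times\{0,1\}^t\to\{0,1\}$ be a Boolean function with $\mathrm{Cov}_0(h)=c$ and $\mathrm{UCov}_1(h)=m$. Then there exists a graph $G$ on at most $2^{2t}$ vertices with $\mathrm{bp}(G)\le m^2$ and $\chi(G)\ge\sqrt{c}$.
   Context: A $b$-monochromatic rectangle for $h$ is a set $A\times B$ with $A,B\subseteq\{0,1\}^t$ on which $h\equiv b$. $\mathrm{Cov}_b(h)$ is the minimum number of $b$-monochromatic rectangles covering $h^{-1}(b)$; $\mathrm{UCov}_b(h)$ is the minimum number of pairwise disjoint $b$-monochromatic rectangles partitioning $h^{-1}(b)$. For a graph $G$, $\chi(G)$ is the chromatic number and $\mathrm{bp}(G)$ is the minimum number of bicliques (complete bipartite subgraphs) whose edge sets partition $E(G)$. *)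

(* Defs.v *)
From mathcomp Require Import all_boot.
Set Implicit Arguments. Unset Strict Implicit. Unset Printing Implicit Defensive.

Definition cube (t : nat) := (t.-tuple bool)%type.

Section Communication.
Variable t : nat.
Variable h : cube t -> cube t -> bool.

Definition rect (R : {set cube t} * {set cube t}) : {set cube t * cube t} :=
  setX R.1 R.2.

Definition mono_rect (b : bool) (R : {set cube t} * {set cube t}) : bool :=
  [forall x in R.1, forall y in R.2, h x y == b].

Definition preim (b : bool) : {set cube t * cube t} := [set p | h p.1 p.2 == b].

Definition cover_of (b : bool) (k : nat)
    (F : {ffun 'I_k -> {set cube t} * {set cube t}}) : bool :=
  [forall i, mono_rect b (F i)] && (preim b \subset \bigcup_i rect (F i)).

Definition ucover_of (b : bool) (k : nat)
    (F : {ffun 'I_k -> {set cube t} * {set cube t}}) : bool :=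
  cover_of b F && [forall i, forall j, (i != j) ==> [disjoint rect (F i) & rect (F j)]].

Definition coverable (b : bool) (k : nat) : bool :=
  [exists F : {ffun 'I_k -> {set cube t} * {set cube t}}, cover_of b F].
Definition ucoverable (b : bool) (k : nat) : bool :=
  [exists F : {ffun 'I_k -> {set cube t} * {set cube t}}, ucover_of b F].

Lemma ucoverable_ex (b : bool) : exists k, ucoverable b k.
Proof.
exists #|{: cube t * cube t}|; apply/existsP.
pose F := [ffun i : 'I_#|{: cube t * cube t}| =>
  let p := enum_val i in
  if h p.1 p.2 == b then ([set p.1], [set p.2]) else (set0, set0)].
have rF i : rect (F i) = if h (enum_val i).1 (enum_val i).2 == b
                          then [set enum_val i] else set0.
  rewrite /rect ffunE /=; case: (h _ _ == b) => /=.
    apply/setP => -[x y]; rewrite !inE /=.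
    by case: (enum_val i) => a c.
  by apply/setP => -[x y]; rewrite !inE.
exists F; apply/andP; split; first (apply/andP; split).
- apply/forallP => i; apply/forall_inP => x xi; apply/forall_inP => y yi.
  move: xi yi; rewrite ffunE /=; case: eqP => hb /=; last by rewrite inE.
  by rewrite !inE => /eqP -> /eqP ->; apply/eqP.
- apply/subsetP => p; rewrite inE => hp; apply/bigcupP.
  exists (enum_rank p) => //; rewrite rF enum_rankK hp; exact: set11.
- apply/forallP => i; apply/forallP => j; apply/implyP => ij.
  rewrite !rF; case: (_ == b); last by rewrite -setI_eq0 set0I.
  case: (_ == b); last by rewrite -setI_eq0 setI0.
  rewrite disjoints1 inE; apply: contra ij => /eqP e.
  by apply/eqP/enum_val_inj.
Qed.

Lemma coverable_ex (b : bool) : exists k, coverable b k.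
Proof.
have [k /existsP [F /andP [H _]]] := ucoverable_ex b.
by exists k; apply/existsP; exists F.
Qed.

Definition Cov (b : bool) : nat := ex_minn (coverable_ex b).
Definition UCov (b : bool) : nat := ex_minn (ucoverable_ex b).

End Communication.

Record graph (n : nat) := Graph {
  adj : rel 'I_n;
  adj_sym : symmetric adj;
  adj_irr : irreflexive adj }.

Section GraphParams.
Variables (n : nat) (G : graph n).

Definition proper_col (k : nat) (f : {ffun 'I_n -> 'I_k}) : bool :=
  [forall u, forall v, adj G u v ==> (f u != f v)].
Definition colorable (k : nat) : bool :=
  [exists f : {ffun 'I_n -> 'I_k}, proper_col f].

Lemma colorable_ex : exists k, colorable k.
Proof.
exists n; apply/existsP; exists [ffun u => u].
apply/forallP => u; apply/forallP => v; apply/implyP => e; rewrite !ffunE.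
by apply: contraTneq e => ->; rewrite adj_irr.
Qed.

Definition chi : nat := ex_minn colorable_ex.

Definition biclique (R : {set 'I_n} * {set 'I_n}) : bool :=
  [disjoint R.1 & R.2] && [forall x in R.1, forall y in R.2, adj G x y].
Definition in_bic (R : {set 'I_n} * {set 'I_n}) (u v : 'I_n) : bool :=
  ((u \in R.1) && (v \in R.2)) || ((u \in R.2) && (v \in R.1)).

Definition bp_partition (k : nat) (F : {ffun 'I_k -> {set 'I_n} * {set 'I_n}}) : bool :=
  [forall i, biclique (F i)] &&
  [forall u, forall v, adj G u v ==> (#|[set i | in_bic (F i) u v]| == 1)].
Definition bp_partitionable (k : nat) : bool :=
  [exists F : {ffun 'I_k -> {set 'I_n} * {set 'I_n}}, bp_partition F].

Lemma bp_partitionable_ex : exists k, bp_partitionable k.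
Proof.
exists #|{: 'I_n * 'I_n}|; apply/existsP.
pose F := [ffun i : 'I_#|{: 'I_n * 'I_n}| =>
  let p := enum_val i in
  if adj G p.1 p.2 && (p.1 < p.2) then ([set p.1], [set p.2]) else (set0, set0)].
exists F; apply/andP; split.
  apply/forallP => i; rewrite /biclique ffunE /=.
  case E: (adj G _ _ && _) => /=; last first.
    by rewrite -setI_eq0 set0I eqxx; apply/forall_inP => x; rewrite inE.
  case/andP: E => e lt.
  apply/andP; split.
    rewrite disjoints1 inE; apply/negP => /eqP E; by rewrite E ltnn in lt.
  by apply/forall_inP => x /set1P ->; apply/forall_inP => y /set1P ->.
apply/forallP => u; apply/forallP => v; apply/implyP => e.
wlog uv : u v e / u < v.
  move=> W; case: (ltngtP u v) => [uv|vu|uv]; first exact: W.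
  - have -> : [set i | in_bic (F i) u v] = [set i | in_bic (F i) v u].
      apply/setP => i; rewrite !inE /in_bic; case: (F i) => X Y /=.
      by case: (u \in X) (u \in Y) (v \in X) (v \in Y) => [] [] [] [].
    by apply: W => //; rewrite adj_sym.
  - by move/val_inj: uv e => ->; rewrite adj_irr.
apply/cards1P; exists (enum_rank (u, v)); apply/setP => i; rewrite !inE.
rewrite /in_bic ffunE /=.
case nE: (adj G _ _ && _) => /=; last first.
  rewrite !inE /=; apply/esym/negP => /eqP E.
  by move: nE; rewrite E enum_rankK /= e uv.
case/andP: nE => e' lt.
rewrite !inE; apply/idP/idP.
    case/orP => /andP [/eqP eu /eqP ev].
      by apply/eqP; apply: enum_val_inj; rewrite enum_rankK; case: (enum_val i) eu ev => /= a b -> ->.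
    by move: lt; rewrite -eu -ev => lt; have := ltn_trans uv lt; rewrite ltnn.
  move=> /eqP ->; rewrite enum_rankK /=; by rewrite !eqxx.
Qed.

Definition bp : nat := ex_minn bp_partitionable_ex.

End GraphParams.

(* Main.v *)
Require Import Defs.
From mathcomp Require Import all_boot.

Set Implicit Arguments. Unset Strict Implicit. Unset Printing Implicit Defensive.

Section Transport.
Variable T : finType.
Variable r : rel T.
Hypothesis rs : symmetric r.
Hypothesis ri : irreflexive r.

Definition tadj : rel 'I_#|T| := fun i j => r (enum_val i) (enum_val j).
Lemma tadj_sym : symmetric tadj. Proof. by move=> i j; rewrite /tadj rs. Qed.
Lemma tadj_irr : irreflexive tadj. Proof. by move=> i; rewrite /tadj ri. Qed.
Definition tgraph : graph #|T| := @Graph _ tadj tadj_sym tadj_irr.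

Definition in_bicT (R : {set T} * {set T}) (u v : T) :=
  ((u \in R.1) && (v \in R.2)) || ((u \in R.2) && (v \in R.1)).

Lemma in_bicT_sym R u v : in_bicT R u v = in_bicT R v u.
Proof. by rewrite /in_bicT; case: (u \in R.1); case: (u \in R.2); case: (v \in R.1); case: (v \in R.2). Qed.

Lemma tbp (K : finType) (F : K -> {set T} * {set T}) :
  (forall k, [disjoint (F k).1 & (F k).2]) ->
  (forall k u v, u \in (F k).1 -> v \in (F k).2 -> r u v) ->
  (forall u v, r u v -> #|[set k | in_bicT (F k) u v]| = 1) ->
  bp tgraph <= #|K|.
Proof.
move=> Fd Fc Fp.
pose F' := [ffun i : 'I_#|K| => ([set j : 'I_#|T| | enum_val j \in (F (enum_val i)).1],
                                 [set j : 'I_#|T| | enum_val j \in (F (enum_val i)).2])].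
have bpP : bp_partitionable tgraph #|K|.
  apply/existsP; exists F'; apply/andP; split.
    apply/forallP => i; rewrite /biclique ffunE /=; apply/andP; split.
      rewrite -setI_eq0; apply/eqP/setP => j; rewrite !inE.
      have := Fd (enum_val i); rewrite -setI_eq0 => /eqP /setP /(_ (enum_val j)).
      by rewrite !inE.
    apply/forall_inP => a; rewrite inE => ha; apply/forall_inP => b; rewrite inE => hb.
    exact: Fc ha hb.
  apply/forallP => a; apply/forallP => b; apply/implyP => e.
  have := Fp _ _ e.
  have -> : [set i | in_bic (F' i) a b] =
            enum_rank @: [set k | in_bicT (F k) (enum_val a) (enum_val b)].
    apply/setP => i; rewrite inE; apply/idP/imsetP.
      move=> H; exists (enum_val i); last by rewrite enum_valK.
      by rewrite inE; move: H; rewrite /in_bic ffunE /= !inE.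
    by move=> [k]; rewrite inE => H ->; rewrite /in_bic ffunE /= !inE enum_rankK.
  by rewrite card_imset; [move->|exact: enum_rank_inj].
by rewrite /bp; case: ex_minnP => k _ /(_ _ bpP).
Qed.
End Transport.

Definition colnat n (G : graph n) (i : 'I_n) : nat :=
  if [pick f : {ffun 'I_n -> 'I_(chi G)} | proper_col G f] is Some f then f i else 0.

Lemma colnatP n (G : graph n) :
  (forall i, colnat G i < chi G) /\ (forall i j, adj G i j -> colnat G i != colnat G j).
Proof.
rewrite /colnat; case: pickP => [f Pf | none].
  split=> [i|i j e]; first exact: ltn_ord.
  move/forallP: Pf => /(_ i) /forallP /(_ j) /implyP /(_ e) H.
  by apply: contra H => /eqP ev; apply/eqP/val_inj.
have : colorable G (chi G) by rewrite /chi; case: ex_minnP.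
by move/existsP => [f Pf]; have := none f; rewrite Pf.
Qed.

Section TCol.
Variable T : finType.
Variable r : rel T.
Hypothesis rs : symmetric r.
Hypothesis ri : irreflexive r.
Definition tcol (u : T) : nat := colnat (tgraph rs ri) (enum_rank u).
Lemma tcol_lt u : tcol u < chi (tgraph rs ri).
Proof. by case: (colnatP (tgraph rs ri)) => H _; apply: H. Qed.
Lemma tcolP u v : r u v -> tcol u != tcol v.
Proof.
move=> e; case: (colnatP (tgraph rs ri)) => _ H; apply: H.
by rewrite /= /tadj !enum_rankK.
Qed.
End TCol.

Lemma cov_le t (h : cube t -> cube t -> bool) b (K : finType)
    (F : K -> {set cube t} * {set cube t}) :
  (forall k, mono_rect h b (F k)) ->
  (forall x y, h x y = b -> exists k, (x \in (F k).1) && (y \in (F k).2)) ->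
  Cov h b <= #|K|.
Proof.
move=> Fm Fc.
have P : coverable h b #|K|.
  apply/existsP; exists [ffun i => F (enum_val i)]; apply/andP; split.
    by apply/forallP => i; rewrite ffunE.
  apply/subsetP => p; rewrite inE => /eqP hp; apply/bigcupP.
  have [k Hk] := Fc _ _ hp.
  by exists (enum_rank k) => //; rewrite /rect ffunE enum_rankK; case: p hp Hk => x y /= _ Hk; rewrite in_setX.
by rewrite /Cov; case: ex_minnP => k _ /(_ _ P).
Qed.

Section Main.
Variable t : nat.
Variable h : cube t -> cube t -> bool.
Variable m : nat.
Variable R : 'I_m -> {set cube t} * {set cube t}.
Hypothesis Rmono : forall i, mono_rect h true (R i).
Hypothesis Rcov : forall x y, h x y -> exists i, (x \in (R i).1) && (y \in (R i).2).
Hypothesis Rdisj : forall i j x y, x \in (R i).1 -> y \in (R i).2 ->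
  x \in (R j).1 -> y \in (R j).2 -> i = j.

Local Notation T := (cube t * cube t)%type.

Lemma Rone i x y : x \in (R i).1 -> y \in (R i).2 -> h x y.
Proof.
by move=> hx hy; move/forall_inP: (Rmono i) => /(_ _ hx) /forall_inP /(_ _ hy) /eqP.
Qed.

Lemma Runiq x y : h x y -> exists i0, forall j, (x \in (R j).1) && (y \in (R j).2) = (j == i0).
Proof.
move=> hxy; have [i0 /andP [a b]] := Rcov hxy; exists i0 => j.
apply/idP/eqP => [/andP [a' b']|->]; last by rewrite a b.
exact: Rdisj a' b' a b.
Qed.

Definition andr : rel T := fun u v =>
  [&& ~~ h u.1 u.2, ~~ h v.1 v.2, h u.1 v.2 & h v.1 u.2].
Lemma andr_sym : symmetric andr.
Proof.
by move=> u v; rewrite /andr; case: (h u.1 u.2); case: (h v.1 v.2);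
  case: (h u.1 v.2); case: (h v.1 u.2).
Qed.
Lemma andr_irr : irreflexive andr.
Proof. by move=> u; rewrite /andr; case: (h u.1 u.2); rewrite ?andbF. Qed.

Definition Gand := tgraph andr_sym andr_irr.
Definition f2 (u : T) : nat := tcol andr_sym andr_irr u.

Definition orr (a : nat) : rel T := fun u v =>
  [&& ~~ h u.1 u.2, ~~ h v.1 v.2, f2 u == a, f2 v == a & h u.1 v.2 || h v.1 u.2].
Lemma orr_sym a : symmetric (orr a).
Proof.
by move=> u v; rewrite /orr; case: (h u.1 u.2); case: (h v.1 v.2);
  case: (f2 u == a); case: (f2 v == a); case: (h u.1 v.2); case: (h v.1 u.2).
Qed.
Lemma orr_irr a : irreflexive (orr a).
Proof. by move=> u; rewrite /orr; case: (h u.1 u.2); rewrite ?andbF. Qed.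
Definition Gor a := tgraph (orr_sym a) (orr_irr a).

Definition Fand (k : 'I_m * 'I_m) : {set T} * {set T} :=
  if k.1 < k.2 then
   ([set u : T | ~~ h u.1 u.2 & (u.1 \in (R k.1).1) && (u.2 \in (R k.2).2)],
    [set v : T | ~~ h v.1 v.2 & (v.1 \in (R k.2).1) && (v.2 \in (R k.1).2)])
  else (set0, set0).

Lemma bp_and : bp Gand <= m ^ 2.
Proof.
have -> : m ^ 2 = #|{: 'I_m * 'I_m}| by rewrite card_prod card_ord mulnn.
apply: (@tbp _ _ _ _ _ Fand).
- move=> [p q]; rewrite /Fand /=; case: (p < q); last by rewrite -setI_eq0 set0I.
  rewrite -setI_eq0; apply/eqP/setP => u; rewrite !inE /=.
  apply: negbTE; apply/negP => /andP [/andP [hz /andP [a1 b2]] /andP [_ /andP [a2 b1]]].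
  by rewrite (Rone a1 b1) in hz.
- move=> [p q] u v; rewrite /Fand /=; case: (p < q); last by rewrite inE.
  rewrite !inE => /andP [hu /andP [a1 b2]] /andP [hv /andP [a2 b1]].
  by rewrite /andr hu hv (Rone a1 b1) (Rone a2 b2).
move=> u v /and4P [hu hv e1 e2].
have [i0 E1] := Runiq e1; have [j0 E2] := Runiq e2.
have ne : i0 != j0.
  apply/negP => /eqP ij; subst j0; move: (E1 i0) (E2 i0); rewrite !eqxx.
  move=> /andP [a _] /andP [_ b]; by rewrite (Rone a b) in hu.
pose k0 := if i0 < j0 then (i0, j0) else (j0, i0).
apply/eqP/cards1P; exists k0; apply/setP => -[p q]; rewrite !inE.
rewrite /in_bicT /Fand /=.
case: ifP => pq; last first.
  rewrite !inE /=; apply/esym/negbTE/negP; rewrite /k0.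
  case: (ltngtP i0 j0) => ij /eqP [pe qe].
  - by move: pq; rewrite pe qe ij.
  - by move: pq; rewrite pe qe ij.
  - by move/val_inj: ij ne => ->; rewrite eqxx.
rewrite !inE /= hu hv /=.
have D1 : [&& (u.1 \in (R p).1) && (u.2 \in (R q).2), v.1 \in (R q).1
    & v.2 \in (R p).2] = (p == i0) && (q == j0).
  rewrite -E1 -E2; by case: (u.1 \in (R p).1); case: (u.2 \in (R q).2);
    case: (v.1 \in (R q).1); case: (v.2 \in (R p).2).
have D2 : [&& (u.1 \in (R q).1) && (u.2 \in (R p).2), v.1 \in (R p).1
    & v.2 \in (R q).2] = (q == i0) && (p == j0).
  rewrite -E1 -E2; by case: (v.1 \in (R p).1); case: (v.2 \in (R q).2);
    case: (u.1 \in (R q).1); case: (u.2 \in (R p).2).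
rewrite D1 D2 /k0.
case: (ltngtP i0 j0) => [ij|ji|ij]; last by move/val_inj: ij ne => ->; rewrite eqxx.
  rewrite xpair_eqE; apply/idP/idP =>
    [/orP [//|/andP [/eqP qe /eqP pe]]|/andP [/eqP pe /eqP qe]]; subst.
  - by move: pq; rewrite ltnNge (ltnW ij).
  - by rewrite !eqxx.
rewrite xpair_eqE; apply/idP/idP =>
    [/orP [/andP [/eqP pe /eqP qe]|/andP [/eqP qe /eqP pe]]|/andP [/eqP pe /eqP qe]]; subst.
- by move: pq; rewrite ltnNge (ltnW ji).
- by rewrite !eqxx.
- by rewrite !eqxx orbT.
Qed.

Definition For (a : nat) (i : 'I_m) : {set T} * {set T} :=
  ([set u : T | [&& ~~ h u.1 u.2, f2 u == a & u.1 \in (R i).1]],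
   [set v : T | [&& ~~ h v.1 v.2, f2 v == a & v.2 \in (R i).2]]).

Lemma not_both u v : ~~ h u.1 u.2 -> ~~ h v.1 v.2 -> f2 u = f2 v ->
  h u.1 v.2 -> ~~ h v.1 u.2.
Proof.
move=> hu hv e e1; apply/negP => e2.
have H := tcolP andr_sym andr_irr.
move: (H u v); rewrite /andr hu hv e1 e2 => /(_ isT).
by rewrite /f2 in e; rewrite e eqxx.
Qed.

Lemma bp_or a : bp (Gor a) <= m ^ 2.
Proof.
apply: (@leq_trans #|{: 'I_m}|); last first.
  by rewrite card_ord -mulnn; case: (posnP m) => [->|mp] //; rewrite leq_pmulr.
apply: (@tbp _ _ _ _ _ (For a)).
- move=> i; rewrite -setI_eq0; apply/eqP/setP => u; rewrite !inE.
  apply: negbTE; apply/negP => /andP [/and3P [hu _ x1] /and3P [_ _ y2]].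
  by rewrite (Rone x1 y2) in hu.
- move=> i u v; rewrite !inE => /and3P [hu fu x1] /and3P [hv fv y2].
  by rewrite /orr hu hv fu fv (Rone x1 y2).
move=> u v; wlog: u v / h u.1 v.2.
  move=> W e; case: (boolP (h u.1 v.2)) => H; first exact: W.
  have e' : orr a v u by rewrite orr_sym.
  have H' : h v.1 u.2 by move: e => /and5P [_ _ _ _]; rewrite (negbTE H).
  rewrite -(W v u H' e'); apply: eq_card => i; by rewrite !inE in_bicT_sym.
move=> e1 /and5P [hu hv fu fv _].
have n2 := not_both hu hv (etrans (eqP fu) (esym (eqP fv))) e1.
have [i0 E] := Runiq e1.
apply/eqP/cards1P; exists i0; apply/setP => i; rewrite !inE /in_bicT /For /= !inE hu hv fu fv /=.
rewrite E; have -> : (u.2 \in (R i).2) && (v.1 \in (R i).1) = false.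
  by apply/negbTE/negP => /andP [y x]; rewrite (Rone x y) in n2.
by rewrite orbF.
Qed.

Lemma cardT : #|{: T}| = 2 ^ (2 * t).
Proof. by rewrite card_prod /cube card_tuple card_bool -expnD addnn -mul2n. Qed.

Lemma main_sec c : Cov h false = c ->
  exists n : nat, n <= 2 ^ (2 * t) /\
    exists G : graph n, bp G <= m ^ 2 /\ c <= chi G ^ 2.
Proof.
move=> hc.
case: (leqP c (chi Gand ^ 2)) => [le|lt].
  exists #|{: T}|; split; first by rewrite cardT.
  by exists Gand; split; [exact: bp_and|].
set k2 := chi Gand in lt.
case: (boolP [exists a : 'I_k2, c <= chi (Gor a) ^ 2]).
  move/existsP => [a Ha]; exists #|{: T}|; split; first by rewrite cardT.
  by exists (Gor a); split; [exact: bp_or|].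
rewrite negb_exists => /forallP Hall.
pose L := \max_(a < k2) chi (Gor a).
have HL : L ^ 2 < c.
  rewrite /L; apply: (big_ind (fun x => x ^ 2 < c)).
  - exact: leq_ltn_trans (leq0n _) lt.
  - by move=> x y hx hy; rewrite /maxn; case: ifP.
  - by move=> a _; rewrite ltnNge; exact: Hall a.
pose g (a : nat) (u : T) := tcol (orr_sym a) (orr_irr a) u.
have gL : forall (a : 'I_k2) u, g a u < L.
  move=> a u; exact: leq_trans (tcol_lt _ _ _) (leq_bigmax a).
pose Fc (k : 'I_k2 * 'I_L) : {set cube t} * {set cube t} :=
 ([set x | [exists y, [&& ~~ h x y, f2 (x,y) == k.1 & g k.1 (x,y) == k.2]]],
  [set y | [exists x, [&& ~~ h x y, f2 (x,y) == k.1 & g k.1 (x,y) == k.2]]]).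
have : c <= #|{: 'I_k2 * 'I_L}|.
  rewrite -hc; apply: (cov_le (F:=Fc)).
  - move=> k; apply/forall_inP => x; rewrite inE => /existsP [y0 /and3P [h0 f0 g0]].
    apply/forall_inP => y; rewrite inE => /existsP [x1 /and3P [h1 f1 g1]].
    apply/eqP/negbTE/negP => hxy.
    have o : orr k.1 (x,y0) (x1,y) by rewrite /orr /= h0 h1 f0 f1 hxy.
    move: (tcolP (orr_sym k.1) (orr_irr k.1) o).
    by rewrite /g in g0 g1; rewrite (eqP g0) (eqP g1) eqxx.
  - move=> x y /negbT hxy.
    have a_lt : f2 (x,y) < k2 by exact: tcol_lt.
    pose a := Ordinal a_lt.
    have b_lt : g a (x,y) < L := gL a (x,y).
    exists (a, Ordinal b_lt); rewrite !inE /=; apply/andP; split; apply/existsP;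
      [exists y|exists x]; by rewrite hxy !eqxx.
rewrite card_prod !card_ord => H.
have h1 : (k2 * L) ^ 2 < c ^ 2.
  by rewrite expnMn -[c ^ 2]mulnn; exact: ltn_mul lt HL.
have h2 : c ^ 2 <= (k2 * L) ^ 2 by rewrite -!mulnn leq_mul.
by have := leq_ltn_trans h2 h1; rewrite ltnn.
Qed.
End Main.

Theorem lemma3p5 (t : nat) (ht : 1 <= t) (h : cube t -> cube t -> bool)
    (c m : nat) (hc : Cov h false = c) (hm : UCov h true = m) :
  exists n : nat, n <= 2 ^ (2 * t) /\
    exists G : graph n, bp G <= m ^ 2 /\ c <= chi G ^ 2.
Proof.
have : ucoverable h true m by rewrite -hm /UCov; case: ex_minnP.
move/existsP => [F /andP [/andP [mono cov] disj]].
apply: (main_sec (R := fun i => F i)) hc.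
- by move=> i; move/forallP: mono.
- move=> x y hxy; have : (x, y) \in Defs.preim h true by rewrite inE hxy.
  move/(subsetP cov)/bigcupP => [i _]; rewrite /rect in_setX => H; by exists i.
- move=> i j x y a b a' b'; case: (eqVneq i j) => // ij.
  move/forallP: disj => /(_ i) /forallP /(_ j) /implyP /(_ ij) D.
  have := disjointFr D (x := (x, y)); rewrite /rect !in_setX /= a b a' b'.
  by move=> /(_ isT).
Qed.
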